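(* There are infinitely many binary strings $w$ (strings over a two-letter alphabet) such that $\sigma(w)/|w| > 2.035$, where $\sigma(w)$ denotes the sum of the exponents of all runs in $w$.
   Context: For a word $u=u_1\cdots u_m$ over a finite alphabet, the (shortest) period $\mathrm{per}(u)$ is the smallest positive integer $p$ such that $u_i=u_{i+p}$ for all $1\le i\le m-p$; $u[i..j]$ denotes the factor $u_i\cdots u_j$. A run in a word $u$ is an interval $[i..j]$ of positions such that the period $p$ of $u[i..j]$ satisfies $2p\le j-i+1$, and the interval cannot be extended to the left or right without violating this, i.e. $u[i-1]\ne u[i+p-1]$ (or $i=1$) and $u[j-p+1]\ne u[j+1]$ (or $j=|u|$). The exponent of such a run is $(j-i+1)/p$. $\sigma(u)$ is the sum of exponents of all runs in $u$. *)

(* Defs.v *)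
From mathcomp Require Import all_boot all_order all_algebra.
Set Implicit Arguments. Unset Strict Implicit. Unset Printing Implicit Defensive.
Import Order.TTheory GRing.Theory Num.Theory.

(* the factor u[i..j] (0-based, inclusive) *)
Definition factor (u : seq bool) (i j : nat) : seq bool :=
  take (j - i + 1) (drop i u).

Definition is_periodb (v : seq bool) (p : nat) : bool :=
  all (fun k => nth false v k == nth false v (k + p)) (iota 0 (size v - p)).

(* shortest positive period (for nonempty v; size v is always a period) *)
Definition per (v : seq bool) : nat :=
  (find (fun p => (0 < p) && is_periodb v p) (iota 0 (size v).+1)).

Definition is_run (u : seq bool) (i j : nat) : bool :=
  let p := per (factor u i j) in
  [&& i <= j, j < size u, 2 * p <= j - i + 1,
      (i == 0) || (nth false u i.-1 != nth false u (i + p).-1)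
    & (j == (size u).-1) || (nth false u (j + 1 - p) != nth false u j.+1)].

Definition run_exponent (u : seq bool) (i j : nat) : rat :=
  ((j - i + 1)%:R / (per (factor u i j))%:R)%R.

Definition sigma (u : seq bool) : rat :=
  (\sum_(i < size u) \sum_(j < size u | is_run u i j) run_exponent u i j)%R.

(* Main.v *)
Require Import Defs.
From Stdlib Require Import NArith.
From mathcomp Require Import all_boot all_order all_algebra.
From mathcomp Require Import zify.
Import Order.TTheory GRing.Theory Num.Theory.

Lemma factor_shift a x b i j : i <= j -> j < size x ->
  factor (a ++ x ++ b) (i + size a) (j + size a) = factor x i j.
Proof.
move=> hij hj; rewrite /factor.
rewrite drop_cat ltnNge leq_addl /= addnK drop_cat.
have -> : i < size x by apply: leq_ltn_trans hj.
rewrite subnDr take_cat size_drop.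
case: ifP => // /negbT h; have e : j - i + 1 = size x - i by lia.
by rewrite e subnn take0 cats0 take_oversize // size_drop.
Qed.


Lemma nth_shift a x b k : k < size x -> nth false (a ++ x ++ b) (k + size a) = nth false x k.
Proof. by move=> h; rewrite nth_cat ltnNge leq_addl /= addnK nth_cat h. Qed.

Lemma run_shift a x b i j : is_run x i j -> 0 < i -> j.+1 < size x ->
  is_run (a ++ x ++ b) (i + size a) (j + size a) /\
  run_exponent (a ++ x ++ b) (i + size a) (j + size a) = run_exponent x i j.
Proof.
move=> hr hi hj; move: hr; rewrite /is_run /run_exponent.
case/and5P => hij _ hp hl hr.
rewrite factor_shift //; last by lia.
set p := per (factor x i j) in hp hl hr *.
split; last by rewrite subnDr.
have hi0 : (i == 0) = false by lia.
rewrite hi0 /= in hl.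
have hj0 : (j == (size x).-1) = false by lia.
rewrite hj0 /= in hr.
apply/and5P; split.
- by rewrite leq_add2r.
- by rewrite !size_cat; lia.
- by rewrite subnDr.
- apply/orP; right.
  have -> : (i + size a).-1 = i.-1 + size a by lia.
  have -> : (i + size a + p).-1 = (i + p).-1 + size a by lia.
  rewrite !nth_shift //; lia.
- apply/orP; right.
  have -> : j + size a + 1 - p = (j + 1 - p) + size a by lia.
  have -> : (j + size a).+1 = j.+1 + size a by lia.
  rewrite !nth_shift //; lia.
Qed.

Local Open Scope ring_scope.

Lemma sub_sum (T : eqType) (S U : seq T) (g : T -> rat) :
  uniq S -> uniq U -> {subset S <= U} -> (forall x, 0 <= g x) ->
  \sum_(x <- S) g x <= \sum_(x <- U) g x.
Proof.
move=> uS uU sSU g0.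
rewrite [in X in _ <= X](bigID (fun x => x \in S)) /=.
have -> : \sum_(i <- U | i \in S) g i = \sum_(x <- S) g x.
  rewrite -big_filter; apply: perm_big; apply: uniq_perm.
  - exact: filter_uniq.
  - exact: uS.
  - by move=> x; rewrite mem_filter; apply/andP/idP => [[]//|h]; split => //; apply: sSU.
by rewrite lerDl sumr_ge0.
Qed.

Lemma exp_ge0 u i j : 0 <= run_exponent u i j.
Proof. by rewrite /run_exponent divr_ge0 ?ler0n. Qed.

Lemma sigmaE u : sigma u = \sum_(ij <- [seq (i, j) | i <- iota 0 (size u), j <- iota 0 (size u)])
   (if is_run u ij.1 ij.2 then run_exponent u ij.1 ij.2 else 0).
Proof.
rewrite big_allpairs /sigma.
have -> : iota 0 (size u) = index_iota 0 (size u) by rewrite /index_iota subn0.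
rewrite big_mkord; apply: eq_bigr => i _.
by rewrite big_mkord big_mkcond.
Qed.

Lemma sigma_ge u (S : seq (nat * nat)) : uniq S -> all (fun ij => is_run u ij.1 ij.2) S ->
  \sum_(ij <- S) run_exponent u ij.1 ij.2 <= sigma u.
Proof.
move=> uS aS; rewrite sigmaE.
have -> : \sum_(ij <- S) run_exponent u ij.1 ij.2 =
   \sum_(ij <- S) (if is_run u ij.1 ij.2 then run_exponent u ij.1 ij.2 else 0).
  rewrite big_seq_cond [in RHS]big_seq_cond; apply: eq_bigr => ij /andP[h _].
  by rewrite (allP aS ij h).
apply: sub_sum => //.
- by apply: allpairs_uniq => //; [exact: iota_uniq | exact: iota_uniq | move=> [? ?] [? ?] _ _].
- move=> [i j] h; have := allP aS _ h; rewrite /is_run /= => /and5P[hij hj _ _ _].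
  apply/allpairsP; exists (i, j) => /=; rewrite !mem_iota /=; split => //; lia.
- by move=> ij; case: ifP => // _; exact: exp_ge0.
Qed.

Fixpoint pw (w : seq bool) (n : nat) : seq bool :=
  if n is n'.+1 then w ++ pw w n' else [::].

Lemma size_pw w n : size (pw w n) = (n * size w)%N.
Proof. by elim: n => //= n IH; rewrite size_cat IH mulSn. Qed.

Lemma pw_add w a b : pw w (a + b) = pw w a ++ pw w b.
Proof. by elim: a => //= a IH; rewrite IH catA. Qed.


Lemma N_le_nat (q : N) (p l K : nat) :
  N.leb (q * N.of_nat p)%num (N.of_nat l * N.of_nat K)%num = true ->
  (N.to_nat q * p <= l * K)%N.
Proof. move=> /N.leb_le h. lia. Qed.

Arguments pw : simpl never.
Arguments per : simpl never.

Definition cert := seq (nat * nat * N).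

Definition check_runs (w : seq bool) (C : cert) : bool :=
  (0 < size w)%N && uniq (map fst C) &&
  all (fun c => [&& is_run (pw w 4) c.1.1 c.1.2, (size w <= c.1.1)%N,
                    (c.1.1 < 2 * size w)%N & (c.1.2.+1 < size (pw w 4))%N]) C.

Definition check_num (w : seq bool) (C : cert) (K : nat) : bool :=
  (0 < K)%N &&
  all (fun c => N.leb (c.2 * N.of_nat (per (factor (pw w 4) c.1.1 c.1.2)))%num
                      (N.of_nat (c.1.2 - c.1.1 + 1) * N.of_nat K)%num) C &&
  N.ltb (2035 * N.of_nat K * N.of_nat (size w))%num
        (1000 * foldr (fun c acc => c.2 + acc) 0 C)%num.

Definition Qsum (C : cert) : nat := sumn (map (fun c => N.to_nat c.2) C).

Lemma QsumE C : N.to_nat (foldr (fun c acc => (c.2 + acc)%num) 0%num C) = Qsum C.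
Proof. elim: C => //= c C IH; rewrite /Qsum /= -/(Qsum C) -IH; lia. Qed.

Lemma per_pos u i j : is_run u i j -> (0 < i)%N -> (0 < per (factor u i j))%N.
Proof.
rewrite /is_run; case/and5P => _ _ _ hl _ hi.
move: hl; have -> : (i == 0) = false by lia.
by case: (per _) => //=; rewrite addn0 eqxx.
Qed.

Lemma fact1 w C K : check_runs w C -> check_num w C K ->
  (Qsum C)%:R / K%:R <= \sum_(c <- C) run_exponent (pw w 4) c.1.1 c.1.2.
Proof.
case/andP => /andP[m0 _] aR /andP[/andP[K0 aN] _].
rewrite /Qsum; elim: C aR aN => [|c C IH].
  by rewrite big_nil mul0r.
rewrite [sumn _]/=.
case/andP => /and4P[hr hm _ _] aR /andP[hN aN].
rewrite big_cons natrD mulrDl; apply: lerD; last exact: IH.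
have pp := per_pos _ _ _ hr (leq_trans m0 hm).
have := N_le_nat _ _ _ _ hN.
rewrite /run_exponent.
set p := per _; set l := (_ - _ + 1)%N; set q := N.to_nat _.
move=> h.
rewrite ler_pdivrMr ?ltr0n // mulrAC ler_pdivlMr ?ltr0n //.
by rewrite -!natrM ler_nat.
Qed.

Lemma shift_inj (m a a' t t' : nat) : (m <= a)%N -> (a < 2 * m)%N ->
  (m <= a')%N -> (a' < 2 * m)%N -> (a + t * m = a' + t' * m)%N -> t = t'.
Proof.
move=> a1 a2 b1 b2 e.
case: (ltngtP t t') => // h.
- have : (t.+1 * m <= t' * m)%N by rewrite leq_mul2r h orbT.
  rewrite mulSn; lia.
- have : (t'.+1 * m <= t * m)%N by rewrite leq_mul2r h orbT.
  rewrite mulSn; lia.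
Qed.

Lemma fact2 w C n : check_runs w C ->
  n%:R * \sum_(c <- C) run_exponent (pw w 4) c.1.1 c.1.2 <= sigma (pw w (n + 3)).
Proof.
case/andP => /andP[m0 uC] aR.
set m := size w.
pose S := [seq (ij.1 + t * m, ij.2 + t * m)%N | t <- iota 0 n, ij <- map fst C].
have key : forall t ij, (t < n)%N -> ij \in map fst C ->
   is_run (pw w (n + 3)) (ij.1 + t * m) (ij.2 + t * m) /\
   run_exponent (pw w (n + 3)) (ij.1 + t * m) (ij.2 + t * m) =
   run_exponent (pw w 4) ij.1 ij.2 /\ (m <= ij.1 < 2 * m)%N.
  move=> t ij tn /mapP[c hc ->].
  have /and4P[hr hm1 hm2 hj] := allP aR c hc.
  have -> : (n + 3 = t + (4 + (n - 1 - t)))%N by lia.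
  rewrite pw_add [pw w (4 + _)]pw_add.
  have -> : (t * m = size (pw w t))%N by rewrite size_pw.
  have [h1 h2] := run_shift (pw w t) _ (pw w (n - 1 - t)) _ _ hr (leq_trans m0 hm1) hj.
  by rewrite h1 h2 hm1 hm2.
apply: le_trans (sigma_ge _ S _ _); last first.
- apply/allP => ij /allpairsP[[t ij'] /= [ht hij ->]].
  rewrite mem_iota in ht; exact: (key t ij' ht hij).1.
- apply: allpairs_uniq; first exact: iota_uniq; first exact: uC.
  move=> [t ij] [t' ij'] /allpairsP[[t1 ij1] /= [ht hij [-> ->]]]
     /allpairsP[[t2 ij2] /= [ht' hij' [-> ->]]] /= [e1 e2].
  rewrite mem_iota in ht; rewrite mem_iota in ht'.
  have [_ [_ /andP[a1 a2]]] := key t1 ij1 ht hij.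
  have [_ [_ /andP[b1 b2]]] := key t2 ij2 ht' hij'.
  have tt : t1 = t2 by exact: (shift_inj _ _ _ _ _ a1 a2 b1 b2 e1).
  subst t2; move: ij1 ij2 e1 e2 {a1 a2 b1 b2 hij hij'} => [a b] [a' b'] /= e1 e2.
  by rewrite (addIn e1) (addIn e2).
rewrite big_allpairs_dep [in X in _ <= X]big_seq.
rewrite (eq_bigr (fun _ => \sum_(c <- C) run_exponent (pw w 4) c.1.1 c.1.2)); last first.
  move=> t; rewrite mem_iota => ht.
  rewrite big_map big_seq [in RHS]big_seq; apply: eq_bigr => c hc.
  by have [_ [-> _]] := key t c.1 ht (map_f _ hc).
rewrite -big_seq; have -> : iota 0 n = index_iota 0 n by rewrite /index_iota subn0.
by rewrite sumr_const_nat subn0 mulr_natl.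
Qed.

Lemma mem_size_le (L : seq (seq bool)) x : x \in L -> (size x <= sumn (map size L))%N.
Proof.
elim: L => //= y L IH; rewrite in_cons => /orP[/eqP->|/IH]; lia.
Qed.

Lemma arith (K m Q k : nat) : (2035 * K * m < 1000 * Q)%N -> (3000 * Q < k)%N ->
  (2035 * ((k + 3) * m) * K < k * Q * 1000)%N.
Proof.
move=> h1 h2.
have h3 : ((2035 * K * m).+1 * k <= 1000 * Q * k)%N by rewrite leq_mul2r h1 orbT.
nia.
Qed.

Lemma mul_div_nat (a b c : nat) : a%:R / b%:R * c%:R = (a * c)%:R / b%:R :> rat.
Proof. by rewrite natrM mulrAC. Qed.

Lemma frac_lt (a b c d : nat) : (0 < b)%N -> (0 < d)%N -> (a * d < c * b)%N ->
  a%:R / b%:R < c%:R / d%:R :> rat.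
Proof.
move=> hb hd h.
rewrite ltr_pdivrMr ?ltr0n // mulrAC ltr_pdivlMr ?ltr0n //.
by rewrite -!natrM ltr_nat.
Qed.

Theorem main_abs w C K : check_runs w C -> check_num w C K ->
  forall L : seq (seq bool),
    exists w : seq bool, w \notin L /\
      (2035%:R / 1000%:R < sigma w / (size w)%:R :> rat)%R.
Proof.
move=> cr cn L.
have F1 := fact1 w C K cr cn.
have m0 : (0 < size w)%N by case/andP: cr => /andP[].
case/andP: cn => /andP[K0 _] /N.ltb_lt hQ.
have hQ' : (2035 * K * size w < 1000 * Qsum C)%N.
  rewrite -QsumE; lia.
set Q := Qsum C in hQ'.
set k := (3000 * Q + 1 + sumn (map size L))%N.
exists (pw w (k + 3)); split.
  apply/negP => /mem_size_le; rewrite size_pw; nia.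
have F2 := fact2 w C k cr.
set E := \sum_(c <- C) _ in F1 F2.
rewrite size_pw.
have Np : (0 < (k + 3) * size w)%N by rewrite muln_gt0 m0 andbT addn3.
rewrite ltr_pdivlMr; last by rewrite ltr0n.
apply: (lt_le_trans _ F2).
apply: (@lt_le_trans _ _ (k%:R * ((Qsum C)%:R / K%:R))); last first.
  by apply: ler_wpM2l; [rewrite ler0n | exact: F1].
rewrite [k%:R * _]mulrA -natrM.
have -> : 2035%:R / 1000%:R * ((k + 3) * size w)%:R =
          (2035 * ((k + 3) * size w))%:R / 1000%:R :> rat.
  exact: mul_div_nat.
apply: frac_lt; [by [] | exact: K0 |].
apply: arith; first exact: hQ'.
rewrite /k; lia.
Qed.


Definition wbest : seq bool := [:: true; true; false; true; false; false; true; false; true; true; false; true; false; true; true; false; true; false; false; true; false; true; true; false; true; false; true; true; false; true; false; true; true; false; true; false; false; true; false; true; true; false; true; false; true; true; false; true; false; false; true; false; true; true; false; true; false; false; true; false; true; true; false; true; false; true; true; false; true; false; false; true; false; true; true; false; true; false; true; true; false; true; false; true; true; false; true; false; false; true; false; true; true; false; true; false; true; true; false; true; false; false; true; false; true; true; false; true; false; true; true; false; true; false; false; true; false; true; true; false; true; false; true; true; false; true; false; true; true; false; true; false; false; true; false; true; true; false; true; false; true; true; false; true; false; false; true; false; true; true; false; true; false; true; true; false; true; false; false; true; false; true; true; false; true; false; false; true; false; true; true; false; true; false; true; true; false; true; false; false; true; false; true; true; false; true; false; true; true; false; true; false; true; true; false; true; false; false; true; false; true; true; false; true; false; true; true; false;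 true; false; false; true; false; true; true; false; true; false; true; true; false; true; false; false; true; false; true; true; false; true; false; true; true; false; true; false; true; true; false; true; false; false; true; false; true; true; false; true; false; true; true; false; true; false; false; true; false; true; true; false; true; false; false; true; false; true; true; false; true; false; true; true; false; true; false; false; true; false; true; true; false; true; false; true; true; false; true; false; true; true; false; true; false; false; true; false; true; true; false; true; false; true; true; false; true; false; false; true; false; true; true; false; true; false; true; true; false; true; false; false; true; false; true; true; false; true; false; false; true; false; true; true; false; true; false; true; true; false; true; false; false; true; false; true; true; false; true; false; true; true; false; true; false; true; true; false; true; false; false; true; false; true; true; false; true; false; true; true; false; true; false; false; true; false; true; true; false; true; false; true; true; false; true; false; false; true; false; true; true; false; true; false; true; true; false; true; false; true; true; false; true; false; false; true; false; true; true; false; true; false; true; true; false; true; false; false; true; false; true; true; false; true; false; true; true; false; true; false; false; true; false; true; true; false; true; false; false; true; false; true; true; false; true; false; true; true; false; true; false; false; true; false; true; true; false; true; false; true; true; false; true; false; true; true; false; true; false; false; true; false; true; true; false; true; false].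
Definition cbest : cert := [:: (475,476,200000%num);(476,479,200000%num);(477,482,200000%num);(479,480,200000%num);(480,483,200000%num);(480,492,260000%num);(480,523,244444%num);(481,486,200000%num);(483,484,200000%num);(484,488,250000%num);(485,500,200000%num);(486,491,200000%num);(488,489,200000%num);(489,492,200000%num);(490,495,200000%num);(492,493,200000%num);(493,496,200000%num);(493,510,360000%num);(494,499,200000%num);(496,497,200000%num);(497,501,250000%num);(498,531,261538%num);(498,736,219266%num);(498,1071,212592%num);(499,504,200000%num);(501,502,200000%num);(502,506,250000%num);(503,518,200000%num);(503,552,238095%num);(504,509,200000%num);(506,507,200000%num);(507,510,200000%num);(508,513,200000%num);(510,511,200000%num);(511,514,200000%num);(511,523,260000%num);(512,517,200000%num);(514,515,200000%num);(515,519,250000%num);(516,539,300000%num);(517,522,200000%num);(519,520,200000%num);(520,523,200000%num);(521,526,200000%num);(523,524,200000%num);(524,527,200000%num);(524,557,261538%num);(524,588,209677%num);(524,640,265909%num);(525,530,200000%num);(527,528,200000%num);(528,531,200000%num);(529,534,200000%num);(531,532,200000%num);(532,535,200000%num);(532,544,260000%num);(532,575,244444%num);(533,538,200000%num);(535,536,200000%num);(536,540,250000%num);(537,552,200000%num);(538,543,200000%num);(540,541,200000%num);(541,544,200000%num);(542,547,200000%num);(544,545,200000%num);(545,548,200000%num);(545,562,360000%num);(546,551,200000%num);(548,549,200000%num);(549,553,250000%num);(550,601,400000%num);(551,556,200000%num);(553,554,200000%num);(554,558,250000%num);(555,570,200000%num);(556,561,200000%num);(558,559,200000%num);(559,562,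200000%num);(560,565,200000%num);(562,563,200000%num);(563,566,200000%num);(563,575,260000%num);(563,632,225806%num);(564,569,200000%num);(566,567,200000%num);(567,571,250000%num);(568,583,200000%num);(568,705,212307%num);(568,897,204968%num);(569,574,200000%num);(571,572,200000%num);(572,575,200000%num);(573,578,200000%num);(575,576,200000%num);(576,579,200000%num);(576,588,260000%num);(576,619,244444%num);(577,582,200000%num);(579,580,200000%num);(580,584,250000%num);(581,596,200000%num);(582,587,200000%num);(584,585,200000%num);(585,588,200000%num);(586,591,200000%num);(588,589,200000%num);(589,592,200000%num);(589,606,360000%num);(590,595,200000%num);(592,593,200000%num);(593,597,250000%num);(594,640,361538%num);(595,600,200000%num);(597,598,200000%num);(598,602,250000%num);(599,614,200000%num);(599,666,200000%num);(600,605,200000%num);(602,603,200000%num);(603,606,200000%num);(604,609,200000%num);(606,607,200000%num);(607,610,200000%num);(607,619,260000%num);(607,801,203125%num);(608,613,200000%num);(610,611,200000%num);(611,615,250000%num);(612,627,200000%num);(612,661,238095%num);(613,618,200000%num);(615,616,200000%num);(616,619,200000%num);(617,622,200000%num);(619,620,200000%num);(620,623,200000%num);(620,632,260000%num);(621,626,200000%num);(623,624,200000%num);(624,628,250000%num);(625,648,300000%num);(626,631,200000%num);(628,629,200000%num);(629,632,200000%num);(630,635,200000%num);(632,633,200000%num);(633,636,200000%num);(633,666,261538%num);(633,697,209677%num);(633,736,236363%num);(634,639,200000%num);(636,637,200000%num);(637,640,200000%num);(638,643,200000%num);(640,641,200000%num);(641,644,200000%num);(641,653,260000%num);(641,684,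244444%num);(642,647,200000%num);(644,645,200000%num);(645,649,250000%num);(646,661,200000%num);(647,652,200000%num);(649,650,200000%num);(650,653,200000%num);(651,656,200000%num);(653,654,200000%num);(654,657,200000%num);(654,671,360000%num);(655,660,200000%num);(657,658,200000%num);(658,662,250000%num);(659,710,400000%num);(660,665,200000%num);(662,663,200000%num);(663,667,250000%num);(664,679,200000%num);(665,670,200000%num);(667,668,200000%num);(668,671,200000%num);(669,674,200000%num);(671,672,200000%num);(672,675,200000%num);(672,684,260000%num);(672,736,209677%num);(673,678,200000%num);(675,676,200000%num);(676,680,250000%num);(677,692,200000%num);(677,788,215384%num);(678,683,200000%num);(680,681,200000%num);(681,684,200000%num);(682,687,200000%num);(684,685,200000%num);(685,688,200000%num);(685,697,260000%num);(685,728,244444%num);(686,691,200000%num);(688,689,200000%num);(689,693,250000%num);(690,705,200000%num);(691,696,200000%num);(693,694,200000%num);(694,697,200000%num);(695,700,200000%num);(697,698,200000%num);(698,701,200000%num);(698,715,360000%num);(699,704,200000%num);(701,702,200000%num);(702,706,250000%num);(703,736,261538%num);(703,866,252307%num);(704,709,200000%num);(706,707,200000%num);(707,711,250000%num);(708,723,200000%num);(708,757,238095%num);(709,714,200000%num);(711,712,200000%num);(712,715,200000%num);(713,718,200000%num);(715,716,200000%num);(716,719,200000%num);(716,728,260000%num);(717,722,200000%num);(719,720,200000%num);(720,724,250000%num);(721,744,300000%num);(722,727,200000%num);(724,725,200000%num);(725,728,200000%num);(726,731,200000%num);(728,729,200000%num);(729,732,200000%num);(729,762,261538%num);(729,793,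209677%num);(729,1006,255045%num);(730,735,200000%num);(732,733,200000%num);(733,736,200000%num);(734,739,200000%num);(736,737,200000%num);(737,740,200000%num);(737,749,260000%num);(737,780,244444%num);(738,743,200000%num);(740,741,200000%num);(741,745,250000%num);(742,757,200000%num);(743,748,200000%num);(745,746,200000%num);(746,749,200000%num);(747,752,200000%num);(749,750,200000%num);(750,753,200000%num);(750,767,360000%num);(751,756,200000%num);(753,754,200000%num);(754,758,250000%num);(755,801,361538%num);(756,761,200000%num);(758,759,200000%num);(759,763,250000%num);(760,775,200000%num);(760,827,200000%num);(761,766,200000%num);(763,764,200000%num);(764,767,200000%num);(765,770,200000%num);(767,768,200000%num);(768,771,200000%num);(768,780,260000%num);(768,1276,248292%num);(769,774,200000%num);(771,772,200000%num);(772,776,250000%num);(773,788,200000%num);(773,822,238095%num);(774,779,200000%num);(776,777,200000%num);(777,780,200000%num);(778,783,200000%num);(780,781,200000%num);(781,784,200000%num);(781,793,260000%num);(782,787,200000%num);(784,785,200000%num);(785,789,250000%num);(786,809,300000%num);(787,792,200000%num);(789,790,200000%num);(790,793,200000%num);(791,796,200000%num);(793,794,200000%num);(794,797,200000%num);(794,827,261538%num);(794,858,209677%num);(794,910,265909%num);(795,800,200000%num);(797,798,200000%num);(798,801,200000%num);(799,804,200000%num);(801,802,200000%num);(802,805,200000%num);(802,814,260000%num);(802,845,244444%num);(803,808,200000%num);(805,806,200000%num);(806,810,250000%num);(807,822,200000%num);(808,813,200000%num);(810,811,200000%num);(811,814,200000%num);(812,817,200000%num);(814,815,200000%num);(815,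818,200000%num);(815,832,360000%num);(816,821,200000%num);(818,819,200000%num);(819,823,250000%num);(820,871,400000%num);(821,826,200000%num);(823,824,200000%num);(824,828,250000%num);(825,840,200000%num);(826,831,200000%num);(828,829,200000%num);(829,832,200000%num);(830,835,200000%num);(832,833,200000%num);(833,836,200000%num);(833,845,260000%num);(833,902,225806%num);(834,839,200000%num);(836,837,200000%num);(837,841,250000%num);(838,853,200000%num);(838,975,212307%num);(839,844,200000%num);(841,842,200000%num);(842,845,200000%num);(843,848,200000%num);(845,846,200000%num);(846,849,200000%num);(846,858,260000%num);(846,889,244444%num);(847,852,200000%num);(849,850,200000%num);(850,854,250000%num);(851,866,200000%num);(852,857,200000%num);(854,855,200000%num);(855,858,200000%num);(856,861,200000%num);(858,859,200000%num);(859,862,200000%num);(859,876,360000%num);(860,865,200000%num);(862,863,200000%num);(863,867,250000%num);(864,910,361538%num);(865,870,200000%num);(867,868,200000%num);(868,872,250000%num);(869,884,200000%num);(869,936,200000%num);(870,875,200000%num);(872,873,200000%num);(873,876,200000%num);(874,879,200000%num);(876,877,200000%num);(877,880,200000%num);(877,889,260000%num);(877,1102,235416%num);(878,883,200000%num);(880,881,200000%num);(881,885,250000%num);(882,897,200000%num);(882,931,238095%num);(883,888,200000%num);(885,886,200000%num);(886,889,200000%num);(887,892,200000%num);(889,890,200000%num);(890,893,200000%num);(890,902,260000%num);(891,896,200000%num);(893,894,200000%num);(894,898,250000%num);(895,918,300000%num);(896,901,200000%num);(898,899,200000%num);(899,902,200000%num);(900,905,200000%num);(902,903,200000%num);(9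03,906,200000%num);(903,936,261538%num);(903,967,209677%num);(903,1006,236363%num);(904,909,200000%num);(906,907,200000%num);(907,910,200000%num);(908,913,200000%num);(910,911,200000%num);(911,914,200000%num);(911,923,260000%num);(911,954,244444%num);(912,917,200000%num);(914,915,200000%num);(915,919,250000%num);(916,931,200000%num);(917,922,200000%num);(919,920,200000%num);(920,923,200000%num);(921,926,200000%num);(923,924,200000%num);(924,927,200000%num);(924,941,360000%num);(925,930,200000%num);(927,928,200000%num);(928,932,250000%num);(929,980,400000%num);(930,935,200000%num);(932,933,200000%num);(933,937,250000%num);(934,949,200000%num);(935,940,200000%num);(937,938,200000%num);(938,941,200000%num);(939,944,200000%num);(941,942,200000%num);(942,945,200000%num);(942,954,260000%num);(942,1006,209677%num);(943,948,200000%num);(945,946,200000%num);(946,950,250000%num);(947,962,200000%num);(947,1058,215384%num);(948,953,200000%num)].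

Lemma cr_best : check_runs wbest cbest.
Proof. vm_compute. reflexivity. Qed.

Lemma cn_best : check_num wbest cbest 100000.
Proof. vm_compute. reflexivity. Qed.

Theorem theorem1 :
  forall L : seq (seq bool),
    exists w : seq bool, w \notin L /\
      (2035%:R / 1000%:R < sigma w / (size w)%:R :> rat)%R.
Proof. exact: (main_abs wbest cbest 100000 cr_best cn_best). Qed.
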